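(* Let $p\in(0,1)$, $q=1-p$, and let $X_1$ be a random variable with ${\sf P}(X_1=\sqrt{q/p})=p$, ${\sf P}(X_1=-\sqrt{p/q})=q$. Let $\Phi$ be the standard normal distribution function. Then $$\Delta_1(p):=\sup_{x\in\mathbb R}\big|{\sf P}(X_1<x)-\Phi(x)\big|=\begin{cases}\Phi(\sqrt{p/q})-p,&0<p<\frac12,\\ \Phi(\sqrt{q/p})-q,&\frac12\le p<1.\end{cases}$$ *)

(* Defs.v *)
From Stdlib Require Import Reals.
From Coquelicot Require Import Coquelicot.
Open Scope R_scope.

Definition Phi (x : R) : R :=
  RInt_gen (fun t => / sqrt (2 * PI) * exp (- (t ^ 2) / 2))
           (Rbar_locally m_infty) (at_point x).

(* The random variable X_1 takes the value sqrt(q/p) with probability p and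
   -sqrt(p/q) with probability q = 1 - p.  Only its law enters the statement;
   P(X_1 < x) is the sum of the masses of the atoms strictly below x. *)
Definition X1_cdf_lt (p x : R) : R :=
  let q := 1 - p in
  (if Rlt_dec (sqrt (q / p)) x then p else 0)
  + (if Rlt_dec (- sqrt (p / q)) x then q else 0).

Definition Delta1_set (p : R) : R -> Prop :=
  fun y => exists x : R, y = Rabs (X1_cdf_lt p x - Phi x).

(* Main.v *)
Require Import Defs.
From Stdlib Require Import Reals Lra.
From Coquelicot Require Import Coquelicot.
Open Scope R_scope.

Ltac rring := match goal with |- ?a = ?b => change (@eq R a b) end; ring.

Definition g (x:R) := exp (-(x^2)/2).
Definition A x := RInt g 0 x.
Definition h (x s : R) := exp (-(x^2*(1+s^2))/2) / (1+s^2).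
Definition H x := RInt (fun s => h x s) 0 1.

Lemma exd_cont (f : R -> R) x : ex_derive f x -> continuous f x.
Proof. intros Hd. exact (ex_derive_continuous (K:=R_AbsRing) (V:=R_NormedModule) f x Hd). Qed.

Lemma g_cont x : continuous g x.
Proof. apply exd_cont. unfold g. auto_derive. auto. Qed.

Lemma g_ex a b : ex_RInt g a b.
Proof. apply (ex_RInt_continuous (V:=R_CompleteNormedModule)). intros; apply g_cont. Qed.

Lemma A_deriv x : is_derive A x (g x).
Proof.
  apply is_derive_RInt with 0.
  apply filter_forall. intros y. apply (RInt_correct (V:=R_CompleteNormedModule)), g_ex.
  apply g_cont.
Qed.

Lemma pos1 s : 1 + s^2 <> 0.
Proof. nra. Qed.

Lemma h_deriv x s : is_derive (fun z => h z s) x (- x * exp(-(x^2*(1+s^2))/2)).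
Proof.
  unfold h. auto_derive. exact I. replace (- (x * (x * 1) * (1 + s * (s * 1))) * / 2) with (-(x^2*(1+s^2))/2) by field. field. nra.
Qed.

Lemma h_ex x a b : ex_RInt (fun s => h x s) a b.
Proof. apply (ex_RInt_continuous (V:=R_CompleteNormedModule)). intros; apply exd_cont. unfold h. auto_derive. nra. Qed.

Lemma cont2 x t : continuity_2d_pt (fun u v => - u * exp(-(u^2*(1+v^2))/2)) x t.
Proof.
  apply continuity_2d_pt_ext with (fun u v => (- u) * exp ((u*u*(1+v*v)) * (-/2))).
  intros; f_equal; f_equal; field.
  apply continuity_2d_pt_mult.
  apply continuity_2d_pt_opp, continuity_2d_pt_id1.
  apply continuity_1d_2d_pt_comp with (f := exp).
  apply derivable_continuous_pt, derivable_pt_exp.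
  apply continuity_2d_pt_mult; [| apply continuity_2d_pt_const].
  apply continuity_2d_pt_mult.
  apply continuity_2d_pt_mult; apply continuity_2d_pt_id1.
  apply continuity_2d_pt_plus. apply continuity_2d_pt_const.
  apply continuity_2d_pt_mult; apply continuity_2d_pt_id2.
Qed.

Lemma H_deriv0 x : is_derive H x (RInt (fun s => - x * exp(-(x^2*(1+s^2))/2)) 0 1).
Proof.
  assert (E: RInt (fun s => - x * exp(-(x^2*(1+s^2))/2)) 0 1 = RInt (fun t => Derive (fun u => h u t) x) 0 1).
  { apply RInt_ext. intros. symmetry. apply is_derive_unique, h_deriv. }
  rewrite E. unfold H.
  apply (is_derive_RInt_param (fun x s => h x s)).
  apply filter_forall. intros. eexists. apply h_deriv.
  intros. apply continuity_2d_pt_ext with (2 := cont2 x t).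
  intros; symmetry; apply is_derive_unique, h_deriv.
  apply filter_forall. intros; apply h_ex.
Qed.

Lemma RInt_scalR (f : R->R) a b k : ex_RInt f a b -> RInt (fun s => k * f s) a b = k * RInt f a b.
Proof. intros Hf. exact (RInt_scal (V:=R_CompleteNormedModule) f a b k Hf). Qed.

Lemma RInt_linR (f : R->R) u v a b : ex_RInt f (u*a+v) (u*b+v) -> RInt (fun y => u * f (u*y+v)) a b = RInt f (u*a+v) (u*b+v).
Proof. intros Hf. exact (RInt_comp_lin (V:=R_CompleteNormedModule) f u v a b Hf). Qed.

Lemma ex_RInt_scalR (f : R->R) a b k : ex_RInt f a b -> ex_RInt (fun s => k * f s) a b.
Proof. intros Hf. exact (ex_RInt_scal (V:=R_NormedModule) f a b k Hf). Qed.

Lemma H_int x : RInt (fun s => - x * exp(-(x^2*(1+s^2))/2)) 0 1 = - g x * A x.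
Proof.
  rewrite (RInt_ext _ (fun s => (- g x) * (x * g (x*s+0)))).
  rewrite RInt_scalR. rewrite RInt_linR. unfold A. replace (x*0+0) with 0 by ring. replace (x*1+0) with x by ring. reflexivity.
  apply g_ex.
  exact (ex_RInt_comp_lin (V:=R_NormedModule) g x 0 0 1 (g_ex _ _)).
  intros s _. unfold g.
  replace (-(x^2*(1+s^2))/2) with (-(x^2)/2 + (-((x*s+0)^2)/2)) by field.
  rewrite exp_plus. match goal with |- ?a = ?b => change (@eq R a b) end; ring.
Qed.

Lemma H_deriv x : is_derive H x (- g x * A x).
Proof. rewrite <- H_int. apply H_deriv0. Qed.

Definition K x := A x ^ 2 + 2 * H x.

Lemma K_deriv x : is_derive K x 0.
Proof.
  assert (D := is_derive_plus (K:=R_AbsRing) (V:=R_NormedModule) _ _ x _ _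
     (is_derive_pow A 2 x _ (A_deriv x)) (is_derive_scal H x 2 _ (H_deriv x))).
  unfold K. 
  replace 0 with (plus (INR 2 * g x * A x ^ Init.Nat.pred 2) (2 * (- g x * A x))).
  exact D.
  unfold plus; simpl. ring.
Qed.

Lemma K_const x : K x = K 0.
Proof.
  destruct (Rtotal_order x 0) as [Hx|[Hx|Hx]].
  - apply (eq_is_derive (V:=R_NormedModule)); auto. intros; apply K_deriv.
  - subst; auto.
  - symmetry. apply (eq_is_derive (V:=R_NormedModule)); auto. intros; apply K_deriv.
Qed.

Lemma K0 : K 0 = PI / 2.
Proof.
  unfold K, A, H. rewrite RInt_point. 
  rewrite (RInt_ext _ (fun s => / (1 + s²))).
  rewrite (is_RInt_unique _ _ _ (minus (atan 1) (atan 0))).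
  rewrite atan_1, atan_0. unfold minus, plus, opp, zero; simpl. field.
  apply (is_RInt_derive (V:=R_CompleteNormedModule) atan). intros; apply is_derive_atan.
  intros. apply exd_cont. auto_derive. unfold Rsqr. nra.
  intros s _. unfold h. unfold Rsqr. replace (- (0 ^ 2 * (1 + s ^ 2)) / 2) with 0 by field.
  rewrite exp_0. simpl. field. nra.
Qed.

Lemma H_nonneg x : 0 <= H x.
Proof.
  unfold H. apply RInt_ge_0. lra. apply h_ex.
  intros s _. unfold h. apply Rle_mult_inv_pos. apply Rlt_le, exp_pos. nra.
Qed.

Lemma exp_mono a b : a <= b -> exp a <= exp b.
Proof. intros [Hab|Hab]; [apply Rlt_le, exp_increasing; auto | subst; lra]. Qed.

Lemma H_le x : H x <= g x.
Proof.
  unfold H. eapply Rle_trans. apply (RInt_le _ (fun _ => g x)). lra. apply h_ex.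
  apply ex_RInt_const.
  intros s Hs. unfold h, g.
  apply Rle_trans with (exp (- (x ^ 2 * (1 + s ^ 2)) / 2)).
  assert (0 < exp (- (x ^ 2 * (1 + s ^ 2)) / 2)) by apply exp_pos.
  assert (1 <= 1 + s^2) by nra.
  unfold Rdiv. rewrite <- (Rmult_1_r (exp _)) at 2. apply Rmult_le_compat_l. lra.
  rewrite <- Rinv_1. apply Rinv_le_contravar; lra.
  apply exp_mono. nra.
  rewrite RInt_const. unfold scal; simpl. unfold mult; simpl. lra.
Qed.

Definition phi (t : R) := / sqrt (2 * PI) * exp (- (t ^ 2) / 2).
Definition J y := RInt phi 0 y.
Definition sq := sqrt (2 * PI).

Lemma sq_sq : sq * sq = 2 * PI.
Proof. unfold sq. apply sqrt_sqrt. generalize PI2_3_2; lra. Qed.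
Lemma sq_pos : 0 < sq.
Proof. unfold sq. apply sqrt_lt_R0. generalize PI2_3_2; lra. Qed.
Lemma PI_bnd : 3 < PI <= 4.
Proof. generalize PI2_3_2 PI_4; lra. Qed.

Lemma phi_g t : phi t = / sq * g t.
Proof. reflexivity. Qed.

Lemma J_A y : J y = / sq * A y.
Proof.
  unfold J, A. rewrite <- RInt_scalR. apply RInt_ext. intros; reflexivity. apply g_ex.
Qed.

Lemma phi_ex a b : ex_RInt phi a b.
Proof. apply (ex_RInt_ext (V:=R_NormedModule) (fun t => / sq * g t)). intros; reflexivity. apply ex_RInt_scalR, g_ex. Qed.

Lemma phi_cont x : continuous phi x.
Proof. apply exd_cont. unfold phi. auto_derive. auto. Qed.

Lemma J_deriv x : is_derive J x (phi x).
Proof.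
  apply is_derive_RInt with 0.
  apply filter_forall. intros y. apply (RInt_correct (V:=R_CompleteNormedModule)), phi_ex.
  apply phi_cont.
Qed.

Lemma J_id y : J y ^ 2 + H y / PI = 1/4.
Proof.
  rewrite J_A. assert (E := K_const y). rewrite K0 in E. unfold K in E.
  assert (S := sq_sq). assert (P := sq_pos). assert (PB := PI_bnd).
  replace ((/ sq * A y)^2) with (A y ^ 2 / (sq*sq)) by (field; lra).
  rewrite S. replace (A y ^ 2) with (PI/2 - 2 * H y) by lra. field. lra.
Qed.

Lemma J_le_half y : J y <= 1/2.
Proof.
  assert (E := J_id y). assert (Hn := H_nonneg y). assert (PB := PI_bnd).
  assert (0 <= H y / PI) by (apply Rle_mult_inv_pos; lra).
  nra.
Qed.

Lemma A_odd y : A (- y) = - A y.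
Proof.
  unfold A. replace (RInt g 0 (-y)) with (RInt g (-1*0+0) (-1*y+0)) by (f_equal; ring).
  rewrite <- (RInt_linR g (-1) 0 0 y).
  replace (- RInt g 0 y) with (-1 * RInt g 0 y) by ring.
  rewrite <- RInt_scalR. apply RInt_ext. intros. unfold g. f_equal. f_equal. f_equal. ring.
  apply g_ex. apply g_ex.
Qed.

Lemma J_odd y : J (- y) = - J y.
Proof. rewrite !J_A, A_odd. rring. Qed.

Lemma J_diff x y : x <= y -> 0 <= J y - J x <= (y - x) / sq.
Proof.
  intros Hxy.
  assert (E : J y - J x = RInt phi x y).
  { unfold J. rewrite <- (RInt_Chasles (V:=R_CompleteNormedModule) phi 0 x y).
    unfold plus; simpl. match goal with |- ?a = ?b => change (@eq R a b) end; ring. apply phi_ex. apply phi_ex. }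
  rewrite E. split.
  apply RInt_ge_0. auto. apply phi_ex. intros. unfold phi. apply Rmult_le_pos.
  apply Rlt_le, Rinv_0_lt_compat, sq_pos. apply Rlt_le, exp_pos.
  eapply Rle_trans. apply (RInt_le _ (fun _ => / sq)). auto. apply phi_ex. apply ex_RInt_const.
  intros t _. unfold phi. fold sq. rewrite <- (Rmult_1_r (/ sq)) at 2.
  apply Rmult_le_compat_l. apply Rlt_le, Rinv_0_lt_compat, sq_pos.
  rewrite <- exp_0. apply exp_mono. nra.
  rewrite RInt_const. unfold scal; simpl. unfold mult; simpl. lra.
Qed.

Lemma J0 : J 0 = 0.
Proof. unfold J. rewrite RInt_point. reflexivity. Qed.

Lemma J_lim eps : 0 < eps -> exists M, forall y, M <= y -> 1/2 - J y < eps.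
Proof.
  intros He. exists (2/eps + 1). intros y Hy.
  assert (Hy0 : 2/eps <= y - 1) by lra.
  assert (0 < 2/eps) by (apply Rdiv_lt_0_compat; lra).
  assert (HJ0 : 0 <= J y). { rewrite <- J0. destruct (J_diff 0 y); lra. }
  assert (E := J_id y). assert (Hn := H_le y). assert (PB := PI_bnd).
  assert (Hg : g y * (1 + y^2/2) <= 1).
  { unfold g. assert (X := exp_ineq1_le (y^2/2)).
    assert (exp (-(y^2)/2) * exp (y^2/2) = 1).
    { rewrite <- exp_plus. replace (-(y^2)/2 + y^2/2) with 0 by field. apply exp_0. }
    assert (0 < exp (-(y^2)/2)) by apply exp_pos. nra. }
  assert (Hg0 : 0 < g y) by apply exp_pos.
  assert (HH : H y / PI <= H y / 3).
  { unfold Rdiv. apply Rmult_le_compat_l. apply H_nonneg. apply Rinv_le_contravar; lra. }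
  assert (Hh : 0 <= H y) by apply H_nonneg.
  assert (Hgeps : g y * (1 + 1/eps) <= 1).
  { assert (y * y >= 2/eps) by nra.
    assert (1/eps <= y^2/2). { unfold Rdiv at 1. replace (2/eps) with (2 * (1/eps)) in * by (field; lra). nra. }
    nra. }
  assert (Hgl : g y < eps).
  { assert (g y * (1/eps) < 1) by nra.
    replace (g y * (1/eps)) with (g y / eps) in H1 by (field; lra).
    apply Rmult_lt_reg_r with (/eps). apply Rinv_0_lt_compat; lra.
    rewrite Rinv_r by lra. exact H1. }
  nra.
Qed.

Lemma Phi_eq x : Phi x = 1/2 + J x.
Proof.
  unfold Phi.
  apply is_RInt_gen_unique.
  apply (is_RInt_gen_ext (Derive J)).
  apply filter_forall. intros ab z _. apply is_derive_unique, J_deriv.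
  replace (1/2 + J x) with (J x - (-1/2)).
  2: { change (@eq R (J x - -1 / 2) (1 / 2 + J x)). field. }
  apply is_RInt_gen_Derive.
  - apply filter_forall. intros ab z _. eexists; apply J_deriv.
  - apply filter_forall. intros ab z _.
    apply (continuous_ext phi). intros; symmetry; apply is_derive_unique, J_deriv.
    apply phi_cont.
  - apply filterlim_locally. intros eps.
    destruct (J_lim eps (cond_pos eps)) as [M HM].
    exists (- M). intros y Hy.
    assert (A1 := HM (- y) ltac:(lra)). assert (A2 := J_le_half (-y)).
    rewrite J_odd in A1, A2.
    change (Rabs (J y - (-1/2)) < eps). apply Rabs_def1; lra.
  - apply filterlim_locally. intros eps. simpl. unfold at_point. apply ball_center.
Qed.

Lemma sq_lt3 : 1 < sq < 3.
Proof.
  assert (S := sq_sq). assert (P := sq_pos). assert (PB := PI_bnd). nra.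
Qed.

Lemma J_lower t : 0 <= t -> (t - t^3/6) / sq <= J t.
Proof.
  intros Ht. unfold J.
  assert (E : RInt (fun x => / sq * (1 - x^2/2)) 0 t = (t - t^3/6)/sq).
  { apply is_RInt_unique.
    replace ((t - t^3/6)/sq) with (minus (/sq * (t - t^3/6)) (/sq * (0 - 0^3/6))).
    apply (is_RInt_derive (V:=R_CompleteNormedModule) (fun x => /sq * (x - x^3/6))).
    intros. auto_derive. auto. field. apply Rgt_not_eq, sq_pos.
    intros. apply exd_cont. auto_derive. auto.
    unfold minus, plus, opp; simpl. field. apply Rgt_not_eq, sq_pos. }
  rewrite <- E. apply RInt_le. auto.
  apply (ex_RInt_continuous (V:=R_CompleteNormedModule)). intros; apply exd_cont; auto_derive; auto.
  apply phi_ex.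
  intros x _. unfold phi. fold sq. apply Rmult_le_compat_l.
  apply Rlt_le, Rinv_0_lt_compat, sq_pos.
  assert (X := exp_ineq1_le (-(x^2)/2)). lra.
Qed.

Lemma J5 t : 0 <= t <= 1 -> t^2/(1+t^2) <= 2 * J t.
Proof.
  intros Ht. assert (L := J_lower t ltac:(lra)). assert (S := sq_lt3).
  apply Rle_trans with (2 * ((t - t^3/6)/sq)); [|lra].
  assert (0 < 1 + t^2) by nra.
  apply Rmult_le_reg_r with ((1+t^2) * sq). nra.
  replace (t^2/(1+t^2) * ((1+t^2)*sq)) with (t^2 * sq) by (field; lra).
  replace (2 * ((t - t^3/6)/sq) * ((1+t^2)*sq)) with (2*(t - t^3/6)*(1+t^2)) by (field; lra).
  assert (t*(2 - 3*t + 5/3*t^2 - t^4/3) >= 0).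
  { apply Rle_ge, Rmult_le_pos. lra. assert (t^4 <= t^2) by (assert (t^2 <= 1) by nra; assert (0 <= t^2) by nra; replace (t^4) with (t^2*t^2) by ring; nra). nra. }
  nra.
Qed.

Lemma J6 t : 0 < t <= 1 -> J (/t) - J t <= (1 - t^2)/(1+t^2).
Proof.
  intros Ht. assert (S := sq_lt3). assert (Q := sq_sq). assert (PB := PI_bnd).
  assert (HJ0 : 0 <= J t). { rewrite <- J0. destruct (J_diff 0 t); lra. }
  assert (Hit : 1 <= /t). { rewrite <- Rinv_1. apply Rinv_le_contravar; lra. }
  assert (0 < 1 + t^2) by nra.
  destruct (Rle_lt_dec (t^2) (1/3)) as [Hs|Hs].
  - assert (J (/t) <= 1/2) by apply J_le_half.
    assert (1/2 <= (1 - t^2)/(1+t^2)).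
    { apply Rmult_le_reg_r with (1+t^2). lra. field_simplify; lra. }
    lra.
  - destruct (J_diff t (/t)) as [_ D]. lra.
    eapply Rle_trans. apply D.
    replace (/t - t) with ((1 - t^2)/t) by (field; lra).
    assert (Hk : 1 + t^2 <= t * sq).
    { assert (t^4 - 4*t^2 + 1 <= 0) by (assert (t^2 <= 1) by nra; replace (t^4) with (t^2*t^2) by ring; nra).
      assert ((t*sq)^2 >= (1+t^2)^2) by nra.
      assert (0 < t * sq) by nra. nra. }
    replace ((1 - t^2)/t/sq) with ((1-t^2) * / (t*sq)) by (field; lra).
    unfold Rdiv. apply Rmult_le_compat_l. nra.
    apply Rinv_le_contravar; lra.
Qed.

Lemma Rabs_le2 a b : -b <= a <= b -> Rabs a <= b.
Proof. intros; apply Rabs_le; lra. Qed.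

Theorem theorem2 (p : R) (hp0 : 0 < p) (hp1 : p < 1) :
  is_lub (Delta1_set p)
    (if Rlt_dec p (/ 2)
     then Phi (sqrt (p / (1 - p))) - p
     else Phi (sqrt ((1 - p) / p)) - (1 - p)).
Proof.
  assert (SQ := sq_lt3).
  unfold is_lub, is_upper_bound, Delta1_set, X1_cdf_lt. cbv zeta.
  destruct (Rlt_dec p (/ 2)) as [Hlt|Hge].
  - set (t := sqrt (p / (1 - p))).
    assert (Ht2 : t * t = p / (1 - p)). { apply sqrt_sqrt. apply Rlt_le, Rdiv_lt_0_compat; lra. }
    assert (Ht0 : 0 < t). { apply sqrt_lt_R0. apply Rdiv_lt_0_compat; lra. }
    assert (Hinv : sqrt ((1 - p) / p) = / t).
    { unfold t. rewrite <- sqrt_inv. f_equal. field. lra. }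
    assert (Hp : p = t^2/(1+t^2)). { assert (E : p = t*t*(1-p)) by (rewrite Ht2; field; lra).
      assert (E2 : p * (1+t^2) = t^2) by (simpl; nra). apply (Rmult_eq_reg_r (1+t^2)); [rewrite E2; field; nra | nra]. }
    assert (Htl : t < 1).
    { assert (t*t < 1). { rewrite Ht2. apply Rmult_lt_reg_r with (1-p). lra. field_simplify; lra. } nra. }
    assert (Hit : 1 < / t). { rewrite <- Rinv_1. apply Rinv_lt_contravar; lra. }
    assert (F5 := J5 t ltac:(lra)). rewrite <- Hp in F5.
    assert (F6 := J6 t ltac:(lra)).
    replace ((1 - t^2)/(1+t^2)) with (1 - 2*p) in F6 by (rewrite Hp; field; nra).
    assert (Jm := J_odd t).
    assert (JB1 := J_le_half (/t)).
    rewrite Hinv. rewrite Phi_eq. split.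
    + intros y [x ->]. rewrite Phi_eq.
      assert (Jx1 := J_le_half x). assert (Jx2 := J_le_half (-x)). rewrite J_odd in Jx2.
      destruct (Rlt_dec (/ t) x) as [H1|H1]; destruct (Rlt_dec (- t) x) as [H2|H2].
      * destruct (J_diff (/t) x) as [D1 _]; [lra|].
        destruct (J_diff t (/t)) as [D2 _]; [lra|].
        apply Rabs_le2. lra.
      * lra.
      * destruct (J_diff x (/t)) as [D1 _]; [lra|].
        destruct (J_diff (-t) x) as [D2 _]; [lra|].
        apply Rabs_le2. lra.
      * destruct (J_diff x (-t)) as [D1 _]; [lra|].
        apply Rabs_le2. lra.
    + intros b Hb. apply Rnot_lt_le. intros Hbs.
      set (eps := 1/2 + J t - p - b).
      set (d := Rmin (eps/2) (t + /t)).
      assert (Hd0 : 0 < d). { unfold d. apply Rmin_pos; unfold eps; lra. }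
      assert (Hd1 : d <= eps/2) by apply Rmin_l.
      assert (Hd2 : d <= t + /t) by apply Rmin_r.
      assert (HB := Hb _ (ex_intro _ (-t + d) eq_refl)). rewrite Phi_eq in HB.
      destruct (Rlt_dec (/ t) (-t + d)) as [H1|H1]; [lra|].
      destruct (Rlt_dec (- t) (-t + d)) as [H2|H2]; [|lra].
      destruct (J_diff (-t) (-t + d)) as [_ D1]; [lra|].
      assert (d / sq <= d). { apply Rmult_le_reg_r with sq. lra. field_simplify; nra. }
      assert (X := Rle_abs (0 + (1 - p) - (1 / 2 + J (- t + d)))).
      replace (- t + d - - t) with d in D1 by ring. unfold eps in Hd1. lra.
  - set (t := sqrt ((1 - p) / p)).
    assert (Ht2 : t * t = (1 - p) / p). { apply sqrt_sqrt. apply Rlt_le, Rdiv_lt_0_compat; lra. }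
    assert (Ht0 : 0 < t). { apply sqrt_lt_R0. apply Rdiv_lt_0_compat; lra. }
    assert (Hinv : sqrt (p / (1 - p)) = / t).
    { unfold t. rewrite <- sqrt_inv. f_equal. field. lra. }
    assert (Hp : 1 - p = t^2/(1+t^2)). { assert (E : 1 - p = t*t*p) by (rewrite Ht2; field; lra).
      assert (E2 : (1 - p) * (1+t^2) = t^2) by (simpl; nra). apply (Rmult_eq_reg_r (1+t^2)); [rewrite E2; field; nra | nra]. }
    assert (Htl : t <= 1).
    { assert (t*t <= 1). { rewrite Ht2. apply Rmult_le_reg_r with p. lra. field_simplify; lra. } nra. }
    assert (Hit : 1 <= / t). { rewrite <- Rinv_1. apply Rinv_le_contravar; lra. }
    assert (F5 := J5 t ltac:(lra)). rewrite <- Hp in F5.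
    assert (F6 := J6 t ltac:(lra)).
    replace ((1 - t^2)/(1+t^2)) with (1 - 2*(1-p)) in F6 by (rewrite Hp; field; nra).
    assert (Jm := J_odd (/t)).
    assert (JB1 := J_le_half t).
    rewrite Hinv. rewrite Phi_eq. split.
    + intros y [x ->]. rewrite Phi_eq.
      assert (Jx1 := J_le_half x). assert (Jx2 := J_le_half (-x)). rewrite J_odd in Jx2.
      destruct (Rlt_dec t x) as [H1|H1]; destruct (Rlt_dec (- / t) x) as [H2|H2].
      * destruct (J_diff t x) as [D1 _]; [lra|].
        apply Rabs_le2. lra.
      * lra.
      * destruct (J_diff x t) as [D1 _]; [lra|].
        destruct (J_diff (-/t) x) as [D2 _]; [lra|].
        apply Rabs_le2. lra.
      * destruct (J_diff x (-/t)) as [D1 _]; [lra|].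
        destruct (J_diff t (/t)) as [D2 _]; [lra|].
        apply Rabs_le2. lra.
    + intros b Hb.
      assert (HB := Hb _ (ex_intro _ t eq_refl)). rewrite Phi_eq in HB.
      destruct (Rlt_dec t t) as [H1|H1]; [lra|].
      destruct (Rlt_dec (- / t) t) as [H2|H2]; [|lra].
      rewrite Rabs_left1 in HB; lra.
Qed.
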